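(* Let $\beta>0$, $g\in\mathcal G$, and $F(x)=(1-x)^\beta g(x)$ for $x\in[0,1)$. Then \[ \lim_{t\to\infty}t\int_0^1F(s)\big[F(s)-F((1-1/t)s)\big]\,ds=-\frac12\int_0^1F(s)^2\,ds. \]
   Context: $\mathcal G$ denotes the set of functions $g:[0,1)\to\mathbb{R}$ of the form $g(x)=G(1/(1-x))$, where $G:(0,\infty)\to\mathbb{R}$ is continuously differentiable and, for every $\varepsilon>0$, $|G(x)|=o(x^\varepsilon)$ and $|xG'(x)|=o(x^\varepsilon)$ as $x\to\infty$ (i.e. they grow slower than any power function). *)

(* Defs.v *)
From Stdlib Require Import Reals.
From Coquelicot Require Import Coquelicot.
Open Scope R_scope.

(* G : (0,oo) -> R is the generator of g in the class \mathcal G: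
   C^1 on (0,oo), and |G(x)| = o(x^eps), |x G'(x)| = o(x^eps) as x -> oo,
   for every eps > 0. Values of G outside (0,oo) are irrelevant. *)
Definition in_calG (G : R -> R) : Prop :=
  (forall x, 0 < x -> ex_derive G x) /\
  (forall x, 0 < x -> continuous (Derive G) x) /\
  (forall eps, 0 < eps ->
     is_lim (fun x => Rabs (G x) / Rpower x eps) p_infty 0) /\
  (forall eps, 0 < eps ->
     is_lim (fun x => Rabs (x * Derive G x) / Rpower x eps) p_infty 0).

Definition g_of (G : R -> R) (x : R) : R := G (1 / (1 - x)).

Definition F_of (beta : R) (G : R -> R) (x : R) : R :=
  Rpower (1 - x) beta * g_of G x.

(* Main.v *)
Require Import Defs.
From Stdlib Require Import Reals Lra.
From Coquelicot Require Import Coquelicot.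
Open Scope R_scope.
From Stdlib Require Import Reals Lra.
From Coquelicot Require Import Coquelicot.
Open Scope R_scope.

Lemma exp_le_mono x y : x <= y -> exp x <= exp y.
Proof. intros [H|H]; [left; now apply exp_increasing | rewrite H; lra]. Qed.

Lemma Rpower_pos x p : 0 < Rpower x p.
Proof. unfold Rpower; apply exp_pos. Qed.

Lemma Rpower_le_base x y p : 0 < x -> x <= y -> 0 <= p -> Rpower x p <= Rpower y p.
Proof. intros; unfold Rpower; apply exp_le_mono; apply Rmult_le_compat_l; auto.
  apply ln_le; auto. Qed.

Lemma Rpower_le_base_neg x y p : 0 < x -> x <= y -> p <= 0 -> Rpower y p <= Rpower x p.
Proof. intros; unfold Rpower; apply exp_le_mono.
  apply Rmult_le_compat_neg_l; auto. apply ln_le; auto. Qed.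

Lemma is_derive_Rpower_1m p s : s < 1 ->
  is_derive (fun s => Rpower (1 - s) p) s (- (p * Rpower (1 - s) (p - 1))).
Proof.
  intros Hs.
  assert (H1 : is_derive (fun x => Rpower x p) (1 - s) (p * Rpower (1 - s) (p - 1))).
  { apply is_derive_Reals. apply derivable_pt_lim_power. lra. }
  assert (H2 : is_derive (fun s : R => 1 - s) s (-1)).
  { auto_derive; auto; ring. }
  pose proof (is_derive_comp _ _ _ _ _ H1 H2) as H.
  replace (- (p * Rpower (1 - s) (p - 1))) with (scal (-1) (p * Rpower (1 - s) (p - 1))).
  exact H. unfold scal; simpl; unfold mult; simpl; ring.
Qed.
Lemma lim_pow c : 0 < c -> is_lim (fun t => Rpower (/ t) c) p_infty 0.
Proof.
  intros Hc. apply is_lim_spec. intros eps. simpl.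
  set (M := / Rpower eps (/ c)).
  assert (HM : 0 < M) by (apply Rinv_0_lt_compat, Rpower_pos).
  exists M. intros t Ht.
  rewrite Rminus_0_r, Rabs_pos_eq by (left; apply Rpower_pos).
  apply Rlt_le_trans with (Rpower (/ M) c).
  - apply Rlt_Rpower_l; auto. split.
    + apply Rinv_0_lt_compat; lra.
    + apply Rinv_lt_contravar; try lra. apply Rmult_lt_0_compat; lra.
  - unfold M. rewrite Rinv_inv, Rpower_mult, Rinv_l, Rpower_1 by (try lra; destruct eps; simpl; lra).
    lra.
Qed.

Lemma lim_ratio : is_lim (fun t => t / (t - 1)) p_infty 1.
Proof.
  apply is_lim_spec. intros eps. simpl.
  exists (2 + 2 / eps). intros t Ht.
  destruct eps as [e He]; simpl in *.
  assert (H2 : 0 < 2 / e) by (apply Rdiv_lt_0_compat; lra).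
  replace (t / (t - 1) - 1) with (/ (t - 1)) by (field; lra).
  rewrite Rabs_pos_eq by (left; apply Rinv_0_lt_compat; lra).
  apply Rmult_lt_reg_l with (t - 1); [lra|].
  rewrite Rinv_r by lra.
  assert (t - 1 > 2 / e) by lra.
  apply Rmult_lt_reg_r with (/ e). apply Rinv_0_lt_compat; lra.
  rewrite Rmult_assoc, Rinv_r, Rmult_1_r by lra. unfold Rdiv in *. lra.
Qed.
Lemma cont_iff f x : continuous f x <-> continuity_pt f x.
Proof. split; apply continuity_pt_filterlim. Qed.

Lemma cont_sq_diff (P : R -> R) a s : (forall x, continuous P x) ->
  continuous (fun s => (P s - P (a * s)) ^ 2) s.
Proof.
  intros HP. apply cont_iff.
  assert (H1 : continuity_pt (fun s => P s - P (a * s)) s).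
  { apply continuity_pt_minus. apply cont_iff, HP.
    apply (continuity_pt_comp (fun s => a * s) P). 
    apply continuity_pt_scal, continuity_pt_id. apply cont_iff, HP. }
  eapply continuity_pt_ext.
  2: apply (continuity_pt_mult _ _ _ H1 H1).
  intros; unfold mult_fct; simpl; ring.
Qed.

Lemma cont_sq (P : R -> R) s : (forall x, continuous P x) ->
  continuous (fun s => P s ^ 2) s.
Proof.
  intros HP. apply cont_iff.
  eapply continuity_pt_ext.
  2: apply (continuity_pt_mult P P); apply cont_iff, HP.
  intros; unfold mult_fct; simpl; ring.
Qed.

Lemma cont_prod_diff (P : R -> R) a s : (forall x, continuous P x) ->
  continuous (fun s => P s * (P s - P (a * s))) s.
Proof.
  intros HP. apply cont_iff.
  apply continuity_pt_mult. apply cont_iff, HP.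
  apply continuity_pt_minus. apply cont_iff, HP.
  apply (continuity_pt_comp (fun s => a * s) P).
  apply continuity_pt_scal, continuity_pt_id. apply cont_iff, HP.
Qed.

Lemma cont_sq_comp (P : R -> R) a s : (forall x, continuous P x) ->
  continuous (fun s => P (a * s) ^ 2) s.
Proof.
  intros HP. apply (continuous_comp (fun s => a * s) (fun s => P s ^ 2)).
  apply cont_iff, continuity_pt_scal, continuity_pt_id. apply cont_sq; auto.
Qed.
Lemma sq_le_of_abs x y : Rabs x <= y -> x ^ 2 <= y ^ 2.
Proof.
  intros H. rewrite <- pow2_abs. apply pow_incr. split; [apply Rabs_pos| exact H].
Qed.

Lemma Rpower_sq x g : Rpower x g ^ 2 = Rpower x (2 * g).
Proof. replace (2 * g) with (g + g) by ring. rewrite Rpower_plus. simpl; ring. Qed.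

Lemma pw_far (P dP : R -> R) K g h s :
  (forall x, continuous P x) ->
  (forall x, 0 <= x < 1 -> is_derive P x (dP x)) ->
  (forall x, 0 <= x < 1 -> Rabs (dP x) <= K * Rpower (1 - x) (g - 1)) ->
  0 < g < 1 -> 0 < K -> 0 < h < 1 -> 0 < s < 1 - h ->
  (P s - P ((1 - h) * s)) ^ 2 <= K ^ 2 * h ^ 2 * Rpower (1 - s) (2 * g - 2).
Proof.
  intros HP HdP HB2 Hg HK Hh Hs.
  assert (Has : (1 - h) * s <= s) by nra.
  destruct (MVT_gen P ((1 - h) * s) s dP) as [c [Hc Heq]].
  - intros x Hx. rewrite Rmin_left in Hx by lra. rewrite Rmax_right in Hx by lra.
    apply HdP. nra.
  - intros x Hx. apply cont_iff, HP.
  - rewrite Rmin_left in Hc by lra. rewrite Rmax_right in Hc by lra.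
    rewrite Heq.
    replace (dP c * (s - (1 - h) * s)) with (dP c * (s * h)) by ring.
    assert (H1 : Rabs (dP c) <= K * Rpower (1 - s) (g - 1)).
    { eapply Rle_trans. apply HB2. nra.
      apply Rmult_le_compat_l. lra. apply Rpower_le_base_neg; lra. }
    assert (H2 : Rabs (dP c * (s * h)) <= K * Rpower (1 - s) (g - 1) * h).
    { rewrite Rabs_mult. apply Rmult_le_compat; try apply Rabs_pos; auto.
      rewrite Rabs_pos_eq by nra. nra. }
    eapply Rle_trans. apply sq_le_of_abs, H2.
    replace (2 * g - 2) with (2 * (g - 1)) by ring. rewrite <- Rpower_sq. nra.
Qed.

Lemma pw_near (P : R -> R) K g h s :
  (forall x, 0 <= x < 1 -> Rabs (P x) <= K * Rpower (1 - x) g) ->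
  0 < g -> 0 < K -> 0 < h < 1 -> 1 - h < s < 1 ->
  (P s - P ((1 - h) * s)) ^ 2 <= 4 * K ^ 2 * Rpower (2 * h) (2 * g).
Proof.
  intros HB1 Hg HK Hh Hs.
  assert (H1 : Rabs (P s) <= K * Rpower (2 * h) g).
  { eapply Rle_trans. apply HB1. nra.
    apply Rmult_le_compat_l. lra. apply Rpower_le_base; lra. }
  assert (H2 : Rabs (P ((1 - h) * s)) <= K * Rpower (2 * h) g).
  { eapply Rle_trans. apply HB1. nra.
    apply Rmult_le_compat_l. lra. apply Rpower_le_base; nra. }
  assert (H3 : Rabs (P s - P ((1 - h) * s)) <= 2 * (K * Rpower (2 * h) g)).
  { eapply Rle_trans. apply Rabs_triang. rewrite Rabs_Ropp. lra. }
  eapply Rle_trans. apply sq_le_of_abs, H3.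
  rewrite <- Rpower_sq. nra.
Qed.
Lemma plus_R (x y : R) : plus x y = x + y.
Proof. reflexivity. Qed.
Lemma minus_R (x y : R) : minus x y = x - y.
Proof. reflexivity. Qed.
Lemma scal_R (x y : R) : scal x y = x * y.
Proof. reflexivity. Qed.

Lemma D_bound (P dP : R -> R) K g t :
  (forall x, continuous P x) ->
  (forall x, 0 <= x < 1 -> is_derive P x (dP x)) ->
  (forall x, 0 <= x < 1 -> Rabs (P x) <= K * Rpower (1 - x) g) ->
  (forall x, 0 <= x < 1 -> Rabs (dP x) <= K * Rpower (1 - x) (g - 1)) ->
  0 < g < 1/2 -> 0 < K -> 2 <= t ->
  0 <= t * RInt (fun s => (P s - P ((1 - 1 / t) * s)) ^ 2) 0 1 <=
  (K ^ 2 / (1 - 2 * g) + 4 * K ^ 2 * Rpower 2 (2 * g)) * Rpower (/ t) (2 * g).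
Proof.
  intros HP HdP HB1 HB2 Hg HK Ht.
  set (h := / t).
  assert (Hh : 0 < h <= 1/2).
  { unfold h; split. apply Rinv_0_lt_compat; lra.
    replace (1/2) with (/2) by field. apply Rinv_le_contravar; lra. }
  assert (Hth : t * h = 1) by (unfold h; field; lra).
  replace (1 - 1 / t) with (1 - h) by (unfold h, Rdiv; ring).
  set (f := fun s => (P s - P ((1 - h) * s)) ^ 2).
  assert (Hex : forall x y, ex_RInt f x y).
  { intros x y. apply (@ex_RInt_continuous R_CompleteNormedModule). intros; apply cont_sq_diff; auto. }
  split.
  { apply Rmult_le_pos. lra. apply RInt_ge_0. lra. apply Hex.
    intros; unfold f; apply pow2_ge_0. }
  set (a := 1 - h). assert (Ha : 1/2 <= a < 1) by (unfold a; lra).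
  rewrite <- (RInt_Chasles f 0 a 1) by apply Hex. rewrite plus_R.
  set (Psi := fun s => (K ^ 2 * h ^ 2 / (1 - 2 * g)) * Rpower (1 - s) (2 * g - 1)).
  set (g0 := fun s => K ^ 2 * h ^ 2 * Rpower (1 - s) (2 * g - 2)).
  assert (Hder : forall x, x < 1 -> is_derive Psi x (g0 x)).
  { intros x Hx. unfold Psi, g0.
    pose proof (is_derive_Rpower_1m (2 * g - 1) x Hx) as D.
    replace (K ^ 2 * h ^ 2 * Rpower (1 - x) (2 * g - 2)) with
      ((K ^ 2 * h ^ 2 / (1 - 2 * g)) * (- ((2 * g - 1) * Rpower (1 - x) (2 * g - 1 - 1)))).
    2: { replace (2 * g - 1 - 1) with (2 * g - 2) by ring. field. lra. }
    apply is_derive_scal. exact D. }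
  assert (HI : is_RInt g0 0 a (minus (Psi a) (Psi 0))).
  { apply (@is_RInt_derive R_CompleteNormedModule).
    - intros x Hx. rewrite Rmin_left in Hx by lra. rewrite Rmax_right in Hx by lra.
      apply Hder. lra.
    - intros x Hx. rewrite Rmin_left in Hx by lra. rewrite Rmax_right in Hx by lra.
      apply cont_iff. apply derivable_continuous_pt.
      eexists. apply is_derive_Reals. unfold g0. apply is_derive_scal. apply is_derive_Rpower_1m. lra. }
  assert (H1 : RInt f 0 a <= Psi a - Psi 0).
  { rewrite <- minus_R, <- (is_RInt_unique _ _ _ _ HI).
    apply RInt_le. unfold a; lra. apply Hex. eexists; exact HI.
    intros x Hx. unfold f, g0. apply pw_far with dP; auto; lra. }
  assert (H2 : RInt f a 1 <= h * (4 * K ^ 2 * Rpower (2 * h) (2 * g))).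
  { replace h with (1 - a) at 1 by (unfold a; ring).
    assert (Hc : RInt (fun _ => 4 * K ^ 2 * Rpower (2 * h) (2 * g)) a 1 = (1 - a) * (4 * K ^ 2 * Rpower (2 * h) (2 * g))).
    { rewrite RInt_const. reflexivity. }
    rewrite <- Hc.
    apply RInt_le. unfold a; lra. apply Hex. apply ex_RInt_const.
    intros x Hx. unfold f. apply pw_near; auto; unfold a in Hx; lra. }
  assert (HPsi0 : 0 <= Psi 0).
  { unfold Psi. apply Rmult_le_pos. apply Rdiv_le_0_compat.
    apply Rmult_le_pos; apply pow2_ge_0. lra. left; apply Rpower_pos. }
  assert (HPsia : t * Psi a = K ^ 2 / (1 - 2 * g) * Rpower h (2 * g)).
  { unfold Psi, a. replace (1 - (1 - h)) with h by ring.
    assert (E : Rpower h (2 * g) = h * Rpower h (2 * g - 1)).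
    { replace (2 * g) with (1 + (2 * g - 1)) by ring. rewrite Rpower_plus, Rpower_1 by lra.
      replace (1 + (2 * g - 1) - 1) with (2 * g - 1) by ring. reflexivity. }
    rewrite E.
    replace (t * (K ^ 2 * h ^ 2 / (1 - 2 * g) * Rpower h (2 * g - 1))) with
      ((t * h) * (K ^ 2 * h / (1 - 2 * g) * Rpower h (2 * g - 1))) by (field; lra).
    rewrite Hth. field. lra. }
  assert (HRp : Rpower (2 * h) (2 * g) = Rpower 2 (2 * g) * Rpower h (2 * g)).
  { rewrite Rpower_mult_distr; auto; lra. }
  rewrite HRp in H2.
  apply Rle_trans with (t * (Psi a - Psi 0) + t * (h * (4 * K ^ 2 * (Rpower 2 (2 * g) * Rpower h (2 * g))))).
  { rewrite <- Rmult_plus_distr_l. apply Rmult_le_compat_l; lra. }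
  assert (0 <= t * Psi 0) by (apply Rmult_le_pos; lra).
  replace (t * (h * (4 * K ^ 2 * (Rpower 2 (2 * g) * Rpower h (2 * g))))) with
    ((t * h) * (4 * K ^ 2 * (Rpower 2 (2 * g) * Rpower h (2 * g)))) by ring.
  rewrite Hth. rewrite Rmult_minus_distr_l, HPsia. lra.
Qed.
Lemma exR (f : R -> R) a b : (forall x, continuous f x) -> ex_RInt f a b.
Proof. intros H. apply (@ex_RInt_continuous R_CompleteNormedModule). intros; apply H. Qed.

Lemma isR (f : R -> R) a b : (forall x, continuous f x) -> is_RInt f a b (RInt f a b).
Proof. intros H. apply (@RInt_correct R_CompleteNormedModule). apply exR; auto. Qed.

Lemma R1_bound (P : R -> R) K g t :
  (forall x, continuous P x) ->
  (forall x, 0 <= x < 1 -> Rabs (P x) <= K * Rpower (1 - x) g) ->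
  0 < g -> 0 < K -> 2 <= t ->
  0 <= t * RInt (fun s => P s ^ 2) (1 - 1 / t) 1 <= K ^ 2 * Rpower (/ t) (2 * g).
Proof.
  intros HP HB1 Hg HK Ht.
  set (h := / t).
  assert (Hh : 0 < h <= 1/2).
  { unfold h; split. apply Rinv_0_lt_compat; lra.
    replace (1/2) with (/2) by field. apply Rinv_le_contravar; lra. }
  assert (Hth : t * h = 1) by (unfold h; field; lra).
  replace (1 - 1 / t) with (1 - h) by (unfold h, Rdiv; ring).
  assert (Hex : ex_RInt (fun s => P s ^ 2) (1 - h) 1) by (apply exR; intros; apply cont_sq; auto).
  split.
  { apply Rmult_le_pos. lra. apply RInt_ge_0. lra. exact Hex.
    intros; apply pow2_ge_0. }
  assert (Hc : RInt (fun _ => K ^ 2 * Rpower h (2 * g)) (1 - h) 1 = h * (K ^ 2 * Rpower h (2 * g))).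
  { rewrite RInt_const. unfold scal; simpl; unfold mult; simpl. ring. }
  assert (H : RInt (fun s => P s ^ 2) (1 - h) 1 <= h * (K ^ 2 * Rpower h (2 * g))).
  { rewrite <- Hc. apply RInt_le. lra. exact Hex. apply ex_RInt_const.
    intros x Hx.
    assert (Hb : Rabs (P x) <= K * Rpower h g).
    { eapply Rle_trans. apply HB1. lra. apply Rmult_le_compat_l. lra.
      apply Rpower_le_base; lra. }
    eapply Rle_trans. apply sq_le_of_abs, Hb. rewrite <- Rpower_sq. nra. }
  apply Rle_trans with (t * (h * (K ^ 2 * Rpower h (2 * g)))).
  apply Rmult_le_compat_l; lra.
  rewrite <- Rmult_assoc, Hth. lra.
Qed.

Lemma identity (P : R -> R) t :
  (forall x, continuous P x) -> 2 <= t ->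
  t * RInt (fun s => P s * (P s - P ((1 - 1 / t) * s))) 0 1 =
  / 2 * (t * RInt (fun s => (P s - P ((1 - 1 / t) * s)) ^ 2) 0 1)
  - / 2 * (t / (t - 1)) * RInt (fun s => P s ^ 2) 0 1
  + / 2 * (t / (t - 1)) * (t * RInt (fun s => P s ^ 2) (1 - 1 / t) 1).
Proof.
  intros HP Ht.
  set (a := 1 - 1 / t).
  assert (Ha : 1/2 <= a < 1).
  { assert (0 < 1 / t) by (apply Rdiv_lt_0_compat; lra).
    assert (1 / t <= 1 / 2).
    { unfold Rdiv. rewrite !Rmult_1_l. apply Rinv_le_contravar; lra. }
    unfold a; lra. }
  set (Q := fun s => P s ^ 2).
  set (D := fun s => (P s - P (a * s)) ^ 2).
  assert (HQ : forall x, continuous Q x) by (intros; apply cont_sq; auto).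
  assert (HD : forall x, continuous D x) by (intros; apply cont_sq_diff; auto).
  assert (HQa : is_RInt (fun s => Q (a * s)) 0 1 (/ a * RInt Q 0 a)).
  { pose proof (is_RInt_comp_lin Q a 0 0 1 (RInt Q 0 a)) as H.
    replace (a * 0 + 0) with 0 in H by ring. replace (a * 1 + 0) with a in H by ring.
    specialize (H (isR Q 0 a HQ)).
    apply (is_RInt_scal _ _ _ (/ a)) in H.
    eapply is_RInt_ext; [|exact H].
    intros x _. unfold scal; simpl; unfold mult; simpl. rewrite Rplus_0_r. field. lra. }
  assert (Hsum : is_RInt (fun s => P s * (P s - P (a * s))) 0 1
     (/ 2 * RInt D 0 1 + / 2 * RInt Q 0 1 - / 2 * (/ a * RInt Q 0 a))).
  { pose proof (is_RInt_scal _ _ _ (/ 2) _ (isR D 0 1 HD)) as H1.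
    pose proof (is_RInt_scal _ _ _ (/ 2) _ (isR Q 0 1 HQ)) as H2.
    pose proof (is_RInt_scal _ _ _ (/ 2) _ HQa) as H3.
    pose proof (is_RInt_minus _ _ _ _ _ _ (is_RInt_plus _ _ _ _ _ _ H1 H2) H3) as H.
    eapply is_RInt_ext; [|exact H].
    intros x _. change ((/ 2 * D x + / 2 * Q x - / 2 * Q (a * x)) = P x * (P x - P (a * x))). unfold D, Q. field. }
  rewrite (is_RInt_unique _ _ _ _ Hsum).
  assert (HC : RInt Q 0 1 = RInt Q 0 a + RInt Q a 1).
  { rewrite <- (RInt_Chasles Q 0 a 1) by (apply exR; auto). reflexivity. }
  fold D Q. rewrite HC.
  unfold a. field. split; lra.
Qed.
Lemma lim_mult_fin (f g : R -> R) x (lf lg : R) :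
  is_lim f x lf -> is_lim g x lg -> is_lim (fun y => f y * g y) x (lf * lg).
Proof. intros H1 H2. apply (is_lim_mult f g x lf lg H1 H2). exact I. Qed.

Lemma lim_Cpow C c : 0 < c -> is_lim (fun t => C * Rpower (/ t) c) p_infty 0.
Proof.
  intros Hc. pose proof (is_lim_scal_l _ C _ _ (lim_pow c Hc)) as H.
  simpl in H. rewrite Rmult_0_r in H. exact H.
Qed.

Lemma abstract_main (P dP : R -> R) K g :
  (forall x, continuous P x) ->
  (forall x, 0 <= x < 1 -> is_derive P x (dP x)) ->
  (forall x, 0 <= x < 1 -> Rabs (P x) <= K * Rpower (1 - x) g) ->
  (forall x, 0 <= x < 1 -> Rabs (dP x) <= K * Rpower (1 - x) (g - 1)) ->
  0 < g < 1/2 -> 0 < K ->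
  is_lim (fun t => t * RInt (fun s => P s * (P s - P ((1 - 1 / t) * s))) 0 1)
    p_infty (- (1 / 2) * RInt (fun s => P s ^ 2) 0 1).
Proof.
  intros HP HdP HB1 HB2 Hg HK.
  set (J := RInt (fun s => P s ^ 2) 0 1).
  set (X := fun t => t * RInt (fun s => (P s - P ((1 - 1 / t) * s)) ^ 2) 0 1).
  set (Y := fun t => t / (t - 1)).
  set (Z := fun t => t * RInt (fun s => P s ^ 2) (1 - 1 / t) 1).
  apply is_lim_ext_loc with (fun t => / 2 * X t - / 2 * Y t * J + / 2 * Y t * Z t).
  { exists 2. intros t Ht. symmetry. apply identity; auto; lra. }
  assert (HX : is_lim X p_infty 0).
  { apply is_lim_le_le_loc with (fun _ => 0)
      (fun t => (K ^ 2 / (1 - 2 * g) + 4 * K ^ 2 * Rpower 2 (2 * g)) * Rpower (/ t) (2 * g)).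
    - exists 2. intros t Ht. apply D_bound with dP; auto; lra.
    - apply is_lim_const.
    - apply lim_Cpow. lra. }
  assert (HZ : is_lim Z p_infty 0).
  { apply is_lim_le_le_loc with (fun _ => 0) (fun t => K ^ 2 * Rpower (/ t) (2 * g)).
    - exists 2. intros t Ht. apply R1_bound; auto; lra.
    - apply is_lim_const.
    - apply lim_Cpow. lra. }
  assert (HY := lim_ratio). fold Y in HY.
  replace (- (1 / 2) * J) with (/ 2 * 0 - / 2 * 1 * J + / 2 * 1 * 0) by field.
  apply is_lim_plus'.
  apply is_lim_minus'.
  apply lim_mult_fin. apply is_lim_const. exact HX.
  apply lim_mult_fin. apply lim_mult_fin. apply is_lim_const. exact HY. apply is_lim_const.
  apply lim_mult_fin. apply lim_mult_fin. apply is_lim_const. exact HY. exact HZ.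
Qed.
Lemma Rpower_1_base e : Rpower 1 e = 1.
Proof. unfold Rpower. rewrite ln_1, Rmult_0_r. apply exp_0. Qed.

Lemma Rpower_inv_base z e : 0 < z -> Rpower (/ z) e = Rpower z (- e).
Proof. intros. unfold Rpower. rewrite ln_Rinv by auto. f_equal. ring. Qed.

Lemma growth (phi : R -> R) e : 0 < e ->
  (forall y, 1 <= y -> continuous phi y) ->
  is_lim (fun y => Rabs (phi y) / Rpower y e) p_infty 0 ->
  exists C, 0 < C /\ forall y, 1 <= y -> Rabs (phi y) <= C * Rpower y e.
Proof.
  intros He Hc Hl. apply is_lim_spec in Hl.
  destruct (Hl (mkposreal 1 Rlt_0_1)) as [M HM]. simpl in HM.
  destruct (continuity_ab_maj (fun y => Rabs (phi y)) 1 (Rmax 1 M)) as [m [Hm Hm']].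
  { apply Rmax_l. }
  { intros c Hc'. apply continuity_pt_comp with (f1 := phi) (f2 := Rabs).
    apply cont_iff, Hc. lra. apply Rcontinuity_abs. }
  exists (1 + Rabs (phi m)). split.
  { pose proof (Rabs_pos (phi m)). lra. }
  intros y Hy.
  assert (Hp : 1 <= Rpower y e).
  { rewrite <- (Rpower_1_base e). apply Rpower_le_base; lra. }
  assert (Hp0 : 0 < Rpower y e) by apply Rpower_pos.
  pose proof (Rabs_pos (phi m)).
  destruct (Rle_lt_dec y (Rmax 1 M)) as [Hle|Hlt].
  - pose proof (Hm y (conj Hy Hle)). simpl in *. nra.
  - assert (HyM : M < y) by (pose proof (Rmax_r 1 M); lra).
    specialize (HM y HyM). rewrite Rminus_0_r in HM.
    rewrite Rabs_pos_eq in HM by (apply Rdiv_le_0_compat; [apply Rabs_pos| exact Hp0]).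
    apply Rmult_lt_compat_r with (r := Rpower y e) in HM; [|exact Hp0].
    unfold Rdiv in HM. rewrite Rmult_assoc, Rinv_l, Rmult_1_r in HM by lra. nra.
Qed.
Lemma F_derive (beta : R) (G : R -> R) x :
  (forall y, 0 < y -> ex_derive G y) -> x < 1 ->
  is_derive (F_of beta G) x
    (Rpower (1 - x) (beta - 1) * (- beta * G (1 / (1 - x)) + (1 / (1 - x)) * Derive G (1 / (1 - x)))).
Proof.
  intros HG Hx.
  assert (Hy : 0 < 1 / (1 - x)) by (apply Rdiv_lt_0_compat; lra).
  assert (D1 := is_derive_Rpower_1m beta x Hx).
  assert (D2 : is_derive (fun x => 1 / (1 - x)) x (/ (1 - x) ^ 2)).
  { auto_derive. lra. field. lra. }
  assert (D3 := Derive_correct G _ (HG _ Hy)).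
  assert (D4 := is_derive_comp G (fun x => 1 / (1 - x)) x _ _ D3 D2).
  assert (D5 := is_derive_mult _ _ x _ _ D1 D4 Rmult_comm).
  unfold F_of, g_of.
  assert (E : Rpower (1 - x) beta = Rpower (1 - x) (beta - 1) * (1 - x)).
  { replace beta with ((beta - 1) + 1) at 1 by ring. rewrite Rpower_plus, Rpower_1 by lra. reflexivity. }
  match goal with |- is_derive _ _ ?l => replace l with
    (plus (mult (- (beta * Rpower (1 - x) (beta - 1))) (G (1 / (1 - x))))
       (mult (Rpower (1 - x) beta) (scal (/ (1 - x) ^ 2) (Derive G (1 / (1 - x)))))) end.
  exact D5.
  change (- (beta * Rpower (1 - x) (beta - 1)) * G (1 / (1 - x)) +
    Rpower (1 - x) beta * (/ (1 - x) ^ 2 * Derive G (1 / (1 - x))) =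
    Rpower (1 - x) (beta - 1) * (- beta * G (1 / (1 - x)) + 1 / (1 - x) * Derive G (1 / (1 - x)))).
  rewrite E. field. lra.
Qed.
Theorem mainTheorem14 (beta : R) (G : R -> R) :
  0 < beta -> in_calG G ->
  is_lim
    (fun t => t * RInt (fun s => F_of beta G s *
                          (F_of beta G s - F_of beta G ((1 - 1 / t) * s))) 0 1)
    p_infty
    (- (1 / 2) * RInt (fun s => (F_of beta G s) ^ 2) 0 1).
Proof.
  intros Hb [HG1 [HG2 [HG3 HG4]]].
  set (g := Rmin (beta / 2) (1 / 4)).
  assert (Hg : 0 < g < 1/2 /\ g <= beta / 2).
  { unfold g. split; [split|]. apply Rmin_glb_lt; lra.
    pose proof (Rmin_r (beta/2) (1/4)); lra. apply Rmin_l. }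
  set (e := beta - g).
  assert (He : 0 < e) by (unfold e; lra).
  destruct (growth G e He) as [C1 [HC1 HBG]].
  { intros y Hy. apply (@ex_derive_continuous R_AbsRing R_NormedModule), HG1. lra. }
  { apply HG3, He. }
  destruct (growth (fun y => y * Derive G y) e He) as [C2 [HC2 HBD]].
  { intros y Hy. apply cont_iff. apply continuity_pt_mult. apply continuity_pt_id.
    apply cont_iff, HG2. lra. }
  { apply HG4, He. }
  set (K := C1 + beta * C1 + C2).
  assert (HK : 0 < K) by (unfold K; nra).
  set (F := F_of beta G).
  set (P := fun x => if Rlt_dec x 1 then F x else 0).
  set (dP := fun x => Rpower (1 - x) (beta - 1) *
      (- beta * G (1 / (1 - x)) + (1 / (1 - x)) * Derive G (1 / (1 - x)))).
  assert (HPF : forall x, x < 1 -> P x = F x).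
  { intros x Hx. unfold P. destruct (Rlt_dec x 1); [reflexivity|contradiction]. }
  assert (HPd : forall x, x < 1 -> is_derive P x (dP x)).
  { intros x Hx. apply is_derive_ext_loc with F.
    - eapply filter_imp; [| apply (open_lt 1 x Hx)]. intros u Hu. simpl in Hu.
      symmetry; apply HPF; auto.
    - apply F_derive; auto. }
  assert (Hz : forall x, 0 <= x < 1 -> 0 < 1 - x /\ 1 <= 1 / (1 - x) /\
             Rpower (1 / (1 - x)) e = Rpower (1 - x) (- e)).
  { intros x Hx. split. lra. split.
    - apply Rmult_le_reg_r with (1 - x). lra. field_simplify; lra.
    - unfold Rdiv. rewrite Rmult_1_l. apply Rpower_inv_base. lra. }
  assert (HB1 : forall x, 0 <= x < 1 -> Rabs (P x) <= K * Rpower (1 - x) g).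
  { intros x Hx. destruct (Hz x Hx) as [Hz1 [Hz2 Hz3]].
    rewrite HPF by lra. unfold F, F_of, g_of.
    rewrite Rabs_mult, (Rabs_pos_eq (Rpower _ _)) by (left; apply Rpower_pos).
    pose proof (HBG _ Hz2) as H. rewrite Hz3 in H.
    apply Rle_trans with (Rpower (1 - x) beta * (C1 * Rpower (1 - x) (- e))).
    apply Rmult_le_compat_l. left; apply Rpower_pos. exact H.
    replace (Rpower (1 - x) beta * (C1 * Rpower (1 - x) (- e))) with
      (C1 * (Rpower (1 - x) beta * Rpower (1 - x) (- e))) by ring.
    rewrite <- Rpower_plus. replace (beta + - e) with g by (unfold e; ring).
    apply Rmult_le_compat_r. left; apply Rpower_pos. unfold K; nra. }
  assert (HB2 : forall x, 0 <= x < 1 -> Rabs (dP x) <= K * Rpower (1 - x) (g - 1)).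
  { intros x Hx. destruct (Hz x Hx) as [Hz1 [Hz2 Hz3]].
    unfold dP.
    rewrite Rabs_mult, (Rabs_pos_eq (Rpower _ _)) by (left; apply Rpower_pos).
    pose proof (HBG _ Hz2) as H. rewrite Hz3 in H.
    pose proof (HBD _ Hz2) as H'. rewrite Hz3 in H'.
    assert (H2 : Rabs (- beta * G (1 / (1 - x)) + 1 / (1 - x) * Derive G (1 / (1 - x)))
                 <= (beta * C1 + C2) * Rpower (1 - x) (- e)).
    { eapply Rle_trans. apply Rabs_triang. rewrite Rabs_mult.
      rewrite Rabs_Ropp, (Rabs_pos_eq beta) by lra. nra. }
    apply Rle_trans with (Rpower (1 - x) (beta - 1) * ((beta * C1 + C2) * Rpower (1 - x) (- e))).
    apply Rmult_le_compat_l. left; apply Rpower_pos. exact H2.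
    replace (Rpower (1 - x) (beta - 1) * ((beta * C1 + C2) * Rpower (1 - x) (- e))) with
      ((beta * C1 + C2) * (Rpower (1 - x) (beta - 1) * Rpower (1 - x) (- e))) by ring.
    rewrite <- Rpower_plus. replace (beta - 1 + - e) with (g - 1) by (unfold e; ring).
    apply Rmult_le_compat_r. left; apply Rpower_pos. unfold K; nra. }
  assert (HPc : forall x, continuous P x).
  { intros x. destruct (Rtotal_order x 1) as [Hx|[Hx|Hx]].
    - apply cont_iff, derivable_continuous_pt. eexists. apply is_derive_Reals, HPd, Hx.
    - subst x. apply cont_iff. intros eps Heps.
      set (alp := Rmin 1 (Rpower (eps / K) (/ g))).
      assert (Halp : 0 < alp) by (apply Rmin_glb_lt; [lra| apply Rpower_pos]).
      exists alp. split; auto. intros y [_ Hy].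
      unfold R_dist, Rdist in *. simpl in *.
      assert (HP1 : P 1 = 0).
      { unfold P. destruct (Rlt_dec 1 1); [lra|reflexivity]. }
      rewrite HP1. unfold Rdist in *. rewrite Rminus_0_r.
      destruct (Rlt_dec y 1) as [Hy1|Hy1].
      + assert (Hy0 : 0 <= y < 1).
        { pose proof (Rmin_l 1 (Rpower (eps / K) (/ g))) as H. fold alp in H.
          rewrite Rabs_left in Hy by lra. lra. }
        eapply Rle_lt_trans. apply HB1, Hy0.
        assert (H1 : 1 - y < Rpower (eps / K) (/ g)).
        { pose proof (Rmin_r 1 (Rpower (eps / K) (/ g))) as H.
          rewrite Rabs_left in Hy by lra. fold alp in H. lra. }
        assert (H2 : Rpower (1 - y) g < eps / K).
        { assert (Eq : Rpower (Rpower (eps / K) (/ g)) g = eps / K).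
          { rewrite Rpower_mult, Rinv_l, Rpower_1. reflexivity.
            apply Rdiv_lt_0_compat; lra. lra. }
          rewrite <- Eq. apply Rlt_Rpower_l; lra. }
        apply Rmult_lt_compat_l with (r := K) in H2; auto.
        replace (K * (eps / K)) with eps in H2 by (field; lra). exact H2.
      + unfold P. destruct (Rlt_dec y 1); [contradiction|]. rewrite Rabs_R0. exact Heps.
    - apply continuous_ext_loc with (fun _ => 0).
      + eapply filter_imp; [| apply (open_gt 1 x Hx)]. intros u Hu. simpl in Hu.
        unfold P. destruct (Rlt_dec u 1); [lra|reflexivity].
      + apply continuous_const. }
  pose proof (abstract_main P dP K g HPc (fun x Hx => HPd x (proj2 Hx)) HB1 HB2 (proj1 Hg) HK) as HM.
  assert (HJ : RInt (fun s => P s ^ 2) 0 1 = RInt (fun s => F_of beta G s ^ 2) 0 1).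
  { apply RInt_ext. intros x Hx. rewrite Rmin_left, Rmax_right in Hx by lra.
    rewrite HPF by lra. reflexivity. }
  rewrite HJ in HM.
  apply is_lim_ext_loc with (2 := HM).
  exists 2. intros t Ht. f_equal. apply RInt_ext.
  intros x Hx. rewrite Rmin_left, Rmax_right in Hx by lra.
  assert (0 < 1 / t) by (apply Rdiv_lt_0_compat; lra).
  rewrite !HPF by nra. reflexivity.
Qed.
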